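(* For every $J\in\mathbb{Z}^r$ and every $\delta\in C_J$, the set $S_{\delta,J}$ has at most $n-1$ elements.
   Context: $B_n$ is the braid group with Artin generators $\sigma_1,\ldots,\sigma_{n-1}$, $B_n^+$ the positive braid monoid, $\Delta$ the Garside element (half twist). For $a,b\in B_n^+$, $a\prec b$ means $ac=b$ for some $c\in B_n^+$. Simple elements are the $s\in B_n^+$ with $s\prec\Delta$. For $a\in B_n$, $\inf(a)$ is the largest $k\in\mathbb{Z}$ with $a=\Delta^kp$, $p\in B_n^+$. For $J=(j_1,\ldots,j_r)\in\mathbb{Z}^r$, $C_J$ is the set of $(d_1,\ldots,d_r)\in(B_n)^r$ with $\inf(d_i)\ge j_i$ for all $i$. For $\delta\in C_J$, $S_{\delta,J}$ is the set of $\prec$-minimal elements of the set of simple elements $s$ with $s^{-1}\delta s\in C_J$ (componentwise conjugation). *)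

(* Defs.v *)
(* The braid group B_n is presented concretely by words in the
   Artin generators and their inverses, modulo the congruence generated by
   free cancellation and the braid relations (the standard presentation). *)
From mathcomp Require Import all_boot all_order all_algebra.
Set Implicit Arguments. Unset Strict Implicit. Unset Printing Implicit Defensive.
Import Order.TTheory GRing.Theory Num.Theory.

(* A letter (i, true) is sigma_{i+1}, (i, false) is sigma_{i+1}^{-1};
   i ranges over 'I_(n-1), i.e. generators sigma_1 .. sigma_{n-1}. *)
Definition letter (n : nat) := ('I_n.-1 * bool)%type.
Definition word (n : nat) := seq (letter n).

Inductive brel (n : nat) : word n -> word n -> Prop :=
| brel_free (i : 'I_n.-1) (e : bool) : brel [:: (i, e); (i, ~~ e)] [::]
| brel_comm (i j : 'I_n.-1) : (i.+1 < j)%N ->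
    brel [:: (i, true); (j, true)] [:: (j, true); (i, true)]
| brel_braid (i j : 'I_n.-1) : (i.+1 = j :> nat) ->
    brel [:: (i, true); (j, true); (i, true)] [:: (j, true); (i, true); (j, true)].

Inductive breq (n : nat) : word n -> word n -> Prop :=
| breq_refl u : breq u u
| breq_sym u v : breq u v -> breq v u
| breq_trans u v w : breq u v -> breq v w -> breq u w
| breq_ctx (a b u v : word n) : brel u v -> breq (a ++ u ++ b) (a ++ v ++ b).

Definition winv n (w : word n) : word n := rev [seq (x.1, ~~ x.2) | x <- w].

Definition is_pos n (w : word n) : Prop :=
  exists p : word n, all (fun x => x.2) p /\ breq w p.

(* Garside element Delta = sigma_1 (sigma_2 sigma_1) ... (sigma_{n-1} ... sigma_1). *)
Definition Delta (n : nat) : word n :=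
  [seq (i, true) | i <- pmap (@insub nat (fun k => k < n.-1)%N 'I_n.-1)
                         (flatten [seq rev (iota 0 k.+1) | k <- iota 0 n.-1])].

Definition wpowz n (w : word n) (k : int) : word n :=
  match k with
  | Posz m => flatten (nseq m w)
  | Negz m => flatten (nseq m.+1 (winv w))
  end.

Definition prec n (a b : word n) : Prop :=
  is_pos a /\ is_pos b /\ exists c, is_pos c /\ breq (a ++ c) b.

Definition simple n (s : word n) : Prop := is_pos s /\ prec s (Delta n).

(* inf(a) >= j, where inf(a) is the largest k with a = Delta^k p, p in B_n^+ :
   some such k is >= j. *)
Definition inf_ge n (j : int) (a : word n) : Prop :=
  exists k : int, (j <= k)%R /\ exists p, is_pos p /\ breq a (wpowz (Delta n) k ++ p).

Definition inC n r (J : 'I_r -> int) (d : 'I_r -> word n) : Prop :=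
  forall i, inf_ge (J i) (d i).

Definition conjw n (s d : word n) : word n := winv s ++ d ++ s.

Definition candS n r (J : 'I_r -> int) (d : 'I_r -> word n) (s : word n) : Prop :=
  simple s /\ ~ breq s [::] /\ inC J (fun i => conjw s (d i)).

Definition inS n r (J : 'I_r -> int) (d : 'I_r -> word n) (s : word n) : Prop :=
  candS J d s /\ forall t, candS J d t -> prec t s -> breq t s.

(* Main.v *)
Require Import Defs.
From mathcomp Require Import all_boot all_order all_algebra.
From mathcomp Require Import zify.
From Stdlib Require Import Classical_Prop IndefiniteDescription.
Set Implicit Arguments. Unset Strict Implicit. Unset Printing Implicit Defensive.

Inductive prel : seq nat -> seq nat -> Prop :=
| prel_comm a b : (a.+1 < b)%N -> prel [:: a; b] [:: b; a]
| prel_braid a : prel [:: a; a.+1; a] [:: a.+1; a; a.+1].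

Inductive peq : seq nat -> seq nat -> Prop :=
| peq_refl u : peq u u
| peq_sym u v : peq u v -> peq v u
| peq_trans u v w : peq u v -> peq v w -> peq u w
| peq_ctx a b u v : prel u v -> peq (a ++ u ++ b) (a ++ v ++ b).

Lemma prel_size u v : prel u v -> size u = size v.
Proof. by case. Qed.

Lemma peq_size u v : peq u v -> size u = size v.
Proof.
elim=> [u0|u0 v0 _ IH|u0 v0 w0 _ IH1 _ IH2|a b u0 v0 H].
- by [].
- by rewrite IH.
- by rewrite IH1 IH2.
- by rewrite !size_cat (prel_size H).
Qed.

Lemma peq_cat3 a b u v : peq u v -> peq (a ++ u ++ b) (a ++ v ++ b).
Proof.
elim=> [u0|u0 v0 _ IH|u0 v0 w0 _ IH1 _ IH2|a0 b0 u0 v0 H].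
- exact: peq_refl.
- exact: peq_sym.
- exact: peq_trans IH1 IH2.
- have := peq_ctx (a ++ a0) (b0 ++ b) H.
  by rewrite !catA -!(catA _ _ b0) -!(catA _ _ b).
Qed.

Lemma peq_catl a u v : peq u v -> peq (a ++ u) (a ++ v).
Proof. by move=> H; have := peq_cat3 a [::] H; rewrite !cats0. Qed.
Lemma peq_catr b u v : peq u v -> peq (u ++ b) (v ++ b).
Proof. by move=> H; have := peq_cat3 [::] b H. Qed.
Lemma peq_cons x u v : peq u v -> peq (x :: u) (x :: v).
Proof. exact: (peq_catl [:: x]). Qed.
Lemma peq_cat u u' v v' : peq u u' -> peq v v' -> peq (u ++ v) (u' ++ v').
Proof.
move=> H1 H2; apply: peq_trans (peq_catr v H1) _; exact: peq_catl.
Qed.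

Definition adj (a b : nat) := (a.+1 == b) || (b.+1 == a).
Definition far (a b : nat) := (a.+1 < b)%N || (b.+1 < a)%N.

Lemma peq_swap a b T : far a b -> peq [:: a, b & T] [:: b, a & T].
Proof.
case/orP=> H.
- exact: (peq_ctx [::] T (prel_comm H)).
- exact: peq_sym (peq_ctx [::] T (prel_comm H)).
Qed.

Lemma peq_br a b T : adj a b -> peq [:: a, b, a & T] [:: b, a, b & T].
Proof.
case/orP=> /eqP <-.
- exact: (peq_ctx [::] T (prel_braid a)).
- exact: peq_sym (peq_ctx [::] T (prel_braid b)).
Qed.

Definition cpl (a b : nat) : seq nat :=
  if a == b then [::] else if adj a b then [:: b; a] else [:: b].

Definition Rel a X b Y := exists Z, peq X (cpl a b ++ Z) /\ peq Y (cpl b a ++ Z).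

Lemma Rel_sym a X b Y : Rel a X b Y -> Rel b Y a X.
Proof. by case=> Z [H1 H2]; exists Z. Qed.

Lemma Rel_eqL a X X' b Y : peq X X' -> Rel a X b Y -> Rel a X' b Y.
Proof. by move=> H [Z [H1 H2]]; exists Z; split=> //; apply: peq_trans (peq_sym H) H1. Qed.

Lemma far_allswap b w T : all (far b) w -> peq (b :: w ++ T) (w ++ b :: T).
Proof.
elim: w => [|x w IH] /=; first by move=> _; exact: peq_refl.
case/andP=> Hx Hw.
apply: peq_trans (peq_swap _ Hx) _; apply: peq_cons; exact: IH.
Qed.

Lemma far_sym a b : far a b = far b a.
Proof. by rewrite /far orbC. Qed.
Lemma adj_sym a b : adj a b = adj b a.
Proof. by rewrite /adj orbC. Qed.

Lemma cpl_cases a b :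
  (a = b /\ cpl a b = [::]) \/ (a <> b /\ adj a b /\ cpl a b = [:: b; a]) \/
  (a <> b /\ far a b /\ ~~ adj a b /\ cpl a b = [:: b]).
Proof.
rewrite /cpl; case: eqP => [->|ne]; first by left.
case: ifP => Hadj; first by right; left.
right; right; split=> //; split; last by split=> //; rewrite Hadj.
move: ne Hadj; rewrite /far /adj; lia.
Qed.

Ltac ptr H := apply: (peq_trans H).

Lemma id1 a b c T (Hab : far a b) (Hac : adj a c) (Hbc : adj b c) :
  peq [:: b, c, a, b, c & T] [:: c, a, b, c, a & T].
Proof.
have Hba : far b a by rewrite far_sym.
have Hca : adj c a by rewrite adj_sym.
ptr (peq_cons b (peq_cons c (peq_swap (c :: T) Hab))).
ptr (peq_br (a :: c :: T) Hbc).
ptr (peq_cons c (peq_cons b (peq_br T Hca))).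
exact: (peq_cons c (peq_swap _ Hba)).
Qed.

Lemma id2 a b c T (Hab : far a b) (Hac : adj a c) (Hbc : adj b c) :
  peq [:: b, c, a, c, b & T] [:: a, c, b, c, a & T].
Proof.
have Hba : far b a by rewrite far_sym.
have Hca : adj c a by rewrite adj_sym.
ptr (peq_cons b (peq_br (b :: T) Hca)).
ptr (peq_swap (c :: a :: b :: T) Hba).
ptr (peq_cons a (peq_cons b (peq_cons c (peq_swap T Hab)))).
exact: (peq_cons a (peq_br (a :: T) Hbc)).
Qed.

Lemma id3 a b c T (Hac : far a c) (Hab : adj a b) (Hbc : adj b c) :
  peq [:: b, a, c, b, a & T] [:: c, b, a, c, b & T].
Proof.
have Hca : far c a by rewrite far_sym.
have Hba : adj b a by rewrite adj_sym.
ptr (peq_cons b (peq_swap (b :: a :: T) Hac)).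
ptr (peq_cons b (peq_cons c (peq_br T Hab))).
ptr (peq_br (a :: b :: T) Hbc).
exact: (peq_cons c (peq_cons b (peq_swap (b :: T) Hca))).
Qed.

Lemma id4 a b c T (Hac : far a c) (Hab : adj a b) (Hbc : adj b c) :
  peq [:: b, c, a, b, c & T] [:: a, b, a, c, b & T].
Proof.
have Hca : far c a by rewrite far_sym.
have Hba : adj b a by rewrite adj_sym.
have Hcb : adj c b by rewrite adj_sym.
ptr (peq_cons b (peq_swap (b :: c :: T) Hca)).
ptr (peq_cons b (peq_cons a (peq_br T Hcb))).
exact: (peq_br (c :: b :: T) Hba).
Qed.

Lemma id5 a b c T (Hab : far a b) (Hac : far a c) :
  peq [:: b, c, a & T] [:: a, b, c & T].
Proof.
have Hca : far c a by rewrite far_sym.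
have Hba : far b a by rewrite far_sym.
ptr (peq_cons b (peq_swap T Hca)).
exact: (peq_swap _ Hba).
Qed.

Lemma Rel_eq a X Y : peq X Y -> Rel a X a Y.
Proof. by move=> H; exists Y; rewrite /cpl eqxx; split=> //; apply: peq_refl. Qed.

Lemma adj_neq a b : adj a b -> a <> b.
Proof. rewrite /adj; lia. Qed.

Lemma Rel_adj a b X Y Z : adj a b -> peq X [:: b, a & Z] -> peq Y [:: a, b & Z] -> Rel a X b Y.
Proof.
move=> H H1 H2; exists Z.
have Hb : adj b a by rewrite adj_sym.
have E1 : (a == b) = false by apply/eqP; exact: adj_neq.
have E2 : (b == a) = false by apply/eqP; exact: adj_neq.
by rewrite /cpl H Hb E1 E2.
Qed.

Lemma far_nadj a b : far a b -> ~~ adj a b.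
Proof. rewrite /far /adj; lia. Qed.
Lemma far_neq a b : far a b -> a <> b.
Proof. rewrite /far; lia. Qed.

Lemma Rel_far a b X Y Z : far a b -> peq X (b :: Z) -> peq Y (a :: Z) -> Rel a X b Y.
Proof.
move=> H H1 H2; exists Z.
have Hb : far b a by rewrite far_sym.
have E1 : (a == b) = false by apply/eqP; exact: far_neq.
have E2 : (b == a) = false by apply/eqP; exact: far_neq.
by rewrite /cpl (negbTE (far_nadj H)) (negbTE (far_nadj Hb)) E1 E2.
Qed.

Lemma Rel_unpack a X b Y : Rel a X b Y ->
  (a = b /\ peq X Y) \/
  (adj a b /\ exists Z, peq X [:: b, a & Z] /\ peq Y [:: a, b & Z]) \/
  (far a b /\ exists Z, peq X (b :: Z) /\ peq Y (a :: Z)).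
Proof.
case=> Z [H1 H2].
case: (cpl_cases a b) => [[E C]|[[ne [Ha C]]|[ne [Hf [_ C]]]]].
- left; split=> //; subst b; move: H2; rewrite /cpl eqxx => H2.
  rewrite C in H1; exact: peq_trans H1 (peq_sym H2).
- right; left; split=> //; exists Z; split; first by rewrite C in H1.
  have Hb : adj b a by rewrite adj_sym.
  move: H2; rewrite /cpl Hb; case: eqP => // E; by move: (ne (esym E)).
- right; right; split=> //; exists Z; split; first by rewrite C in H1.
  have Hb : far b a by rewrite far_sym.
  move: H2; rewrite /cpl (negbTE (far_nadj Hb)); case: eqP => // E; by move: (ne (esym E)).
Qed.

Lemma all_far_cpl b a c : far b a -> far b c -> all (far b) (cpl a c).
Proof. by move=> H1 H2; rewrite /cpl; case: ifP => _ //; case: ifP => _ /=; rewrite ?H1 ?H2. Qed.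

Section Trans.
Variable d : nat.
Hypothesis IH : forall a X b Y, (size X < d)%N -> peq (a :: X) (b :: Y) -> Rel a X b Y.

Lemma IHu a X b Y : peq (a :: X) (b :: Y) -> (size X < d)%N -> 
  (a = b /\ peq X Y) \/
  (adj a b /\ exists Z, peq X [:: b, a & Z] /\ peq Y [:: a, b & Z]) \/
  (far a b /\ exists Z, peq X (b :: Z) /\ peq Y (a :: Z)).
Proof. by move=> H1 H2; apply: Rel_unpack; apply: IH. Qed.

Ltac szl := repeat match goal with H : peq _ _ |- _ => have := peq_size H; clear H end;
  simpl; intros; lia.



Lemma size_lt X b P : peq X (b :: P) -> size P = (size X).-1.
Proof. by move/peq_size=> ->. Qed.

Lemma tr_ff a X b Y c W P Q : size X = d -> far a b -> far b c ->
  peq X (b :: P) -> peq Y (a :: P) -> peq Y (c :: Q) -> peq W (b :: Q) -> Rel a X c W.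
Proof.
move=> sX Hab Hbc HX HY1 HY2 HW.
have [|R [H1 H2]] := IH _ (peq_trans (peq_sym HY1) HY2); first by szl.
have Hba : far b a by rewrite far_sym.
exists (b :: R); split.
- ptr HX; ptr (peq_cons b H1); exact: far_allswap (all_far_cpl Hba Hbc).
- ptr HW; ptr (peq_cons b H2); exact: far_allswap (all_far_cpl Hbc Hba).
Qed.

Lemma tr_fa a X b Y c W P Q : size X = d -> far a b -> adj b c ->
  peq X (b :: P) -> peq Y (a :: P) -> peq Y [:: c, b & Q] -> peq W [:: b, c & Q] -> Rel a X c W.
Proof.
move=> sX Hab Hbc HX HY1 HY2 HW.
case: (IHu (peq_trans (peq_sym HY1) HY2) ltac:(szl)) => [[E _]|[[Hac [R [H1 H2]]]|[Hac [R [H1 H2]]]]].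
- by subst c; move: Hab Hbc; rewrite /far /adj; lia.
- case: (IHu H2 ltac:(szl)) => [[E _]|[[Hba _]|[Hba [R' [H3 H4]]]]].
  + by subst b; move: Hab; rewrite /far; lia.
  + by move: Hab Hba; rewrite /far /adj; lia.
  case: (IHu H4 ltac:(szl)) => [[E _]|[[Hcb [T [H5 H6]]]|[Hcb _]]].
  + by subst b; move: Hbc; rewrite /adj; lia.
  + apply: (Rel_adj (Z := [:: b, c, a & T])) => //.
    * ptr HX; ptr (peq_cons b H1); ptr (peq_cons b (peq_cons c (peq_cons a H5))).
      exact: id1.
    * ptr HW; ptr (peq_cons b (peq_cons c H3)); ptr (peq_cons b (peq_cons c (peq_cons a H6))).
      exact: id2.
  + by move: Hbc Hcb; rewrite /far /adj; lia.
- case: (IHu H2 ltac:(szl)) => [[E _]|[[Hba _]|[Hba [R' [H3 H4]]]]].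
  + by subst b; move: Hab; rewrite /far; lia.
  + by move: Hab Hba; rewrite /far /adj; lia.
  apply: (Rel_far (Z := [:: b, c & R'])) => //.
  + ptr HX; ptr (peq_cons b H1); ptr (peq_cons b (peq_cons c H4)).
    exact: peq_br.
  + ptr HW; ptr (peq_cons b (peq_cons c H3)); exact: id5.
Qed.

Lemma tr_aa a X b Y c W P Q : size X = d -> adj a b -> adj b c ->
  peq X [:: b, a & P] -> peq Y [:: a, b & P] -> peq Y [:: c, b & Q] -> peq W [:: b, c & Q] ->
  Rel a X c W.
Proof.
move=> sX Hab Hbc HX HY1 HY2 HW.
case: (IHu (peq_trans (peq_sym HY1) HY2) ltac:(szl)) => [[E H]|[[Hac _]|[Hac [R [H1 H2]]]]].
- subst c; apply: Rel_eq.
  case: (IHu H ltac:(szl)) => [[_ H']|[[Hbb _]|[Hbb _]]].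
  + ptr HX; apply: peq_sym; ptr HW; exact: peq_cons (peq_cons _ (peq_sym H')).
  + by move: (adj_neq Hbb).
  + by move: (far_neq Hbb).
- by move: Hab Hbc Hac; rewrite /adj; lia.
- case: (IHu H1 ltac:(szl)) => [[E _]|[[_ [R1 [H3 H4]]]|[Hbc' _]]].
  + by subst b; move: Hbc; rewrite /adj; lia.
  2: by move: Hbc Hbc'; rewrite /far /adj; lia.
  case: (IHu (peq_trans H2 (peq_cons a H4)) ltac:(szl)) => [[E _]|[[_ [R2 [H5 H6]]]|[Hba' _]]].
  + by subst b; move: Hab; rewrite /adj; lia.
  2: by move: Hab Hba'; rewrite /far /adj; lia.
  case: (IHu H6 ltac:(szl)) => [[_ H]|[[Hbb _]|[Hbb _]]]; last by move: (far_neq Hbb).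
  2: by move: (adj_neq Hbb).
  case: (IHu H ltac:(szl)) => [[E _]|[[Hca' _]|[Hca' [T [H7 H8]]]]].
  + by subst c; move: Hac; rewrite /far; lia.
  + by move: Hac Hca'; rewrite /far /adj; lia.
  apply: (Rel_far (Z := [:: b, a, c, b & T])) => //.
  + ptr HX; ptr (peq_cons b (peq_cons a H3)); ptr (peq_cons b (peq_cons a (peq_cons c (peq_cons b H7)))).
    exact: id3.
  + ptr HW; ptr (peq_cons b (peq_cons c H5)); ptr (peq_cons b (peq_cons c (peq_cons a (peq_cons b H8)))).
    exact: id4.
Qed.

Lemma Rel_trans a X b Y c W : size X = d -> Rel a X b Y -> Rel b Y c W -> Rel a X c W.
Proof.
move=> sX H1 H2.
case/Rel_unpack: (H1) => [[E HXY]|[[Hab [P [HX HY1]]]|[Hab [P [HX HY1]]]]].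
  subst b; case: H2 => Z [K1 K2]; exists Z; split=> //; exact: peq_trans HXY K1.
all: case/Rel_unpack: (H2) => [[E HYW]|[[Hbc [Q [HY2 HW]]]|[Hbc [Q [HY2 HW]]]]];
  first by subst c; case: H1 => Z [K1 K2]; exists Z; split=> //; exact: peq_trans (peq_sym HYW) K2.
- exact: tr_aa HX HY1 HY2 HW.
- have sW : size W = d.
    by move: (peq_size HX) (peq_size HY1) (peq_size HY2) (peq_size HW) => /=; lia.
  apply: Rel_sym; apply: (tr_fa sW _ _ HW HY2 HY1 HX).
    by rewrite far_sym. by rewrite adj_sym.
- exact: tr_fa HX HY1 HY2 HW.
- exact: tr_ff HX HY1 HY2 HW.
Qed.

End Trans.

Lemma GL_step d :
  (forall a X b Y, (size X < d)%N -> peq (a :: X) (b :: Y) -> Rel a X b Y) ->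
  forall a X b Y, size X = d -> peq (a :: X) (b :: Y) -> Rel a X b Y.
Proof.
move=> IH a X b Y sX H.
have: forall U V, peq U V -> size U = d.+1 -> forall a X b Y, U = a :: X -> V = b :: Y -> Rel a X b Y.
  move=> U V; elim=> {U V} [U|U V HUV IH1|U V W HUV IH1 _ IH2|l r u v Hr].
  - move=> _ a0 X0 b0 Y0 -> [-> ->]; apply: Rel_eq; exact: peq_refl.
  - move=> sV a0 X0 b0 Y0 eU eV; apply: Rel_sym; apply: IH1 eV eU.
    by rewrite -sV; apply: peq_size.
  - move=> sU a0 X0 b0 Y0 eU eW.
    have sV : size V = d.+1 by rewrite -sU (peq_size HUV).
    case: V sV HUV IH1 IH2 => // c Z sV _ IH1 IH2.
    apply: (Rel_trans IH (b := c) (Y := Z)).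
    + by subst; case: sU.
    + exact: IH1.
    + exact: IH2.
  - move=> _ a0 X0 b0 Y0.
    case: l => [|x l] /=.
    + case: Hr => [x y Hxy|x] /= [<- <-] [<- <-].
      * apply: (Rel_far (Z := r)); try exact: peq_refl; by rewrite /far Hxy.
      * apply: (Rel_adj (Z := r)); try exact: peq_refl; by rewrite /adj eqxx.
    + move=> [-> <-] [-> <-]; apply: Rel_eq; exact: peq_ctx.
move=> /(_ _ _ H); apply=> //=; by rewrite sX.
Qed.

Lemma GL a X b Y : peq (a :: X) (b :: Y) -> Rel a X b Y.
Proof.
move=> H.
suff: forall n d, (d < n)%N -> forall a X b Y, size X = d -> peq (a :: X) (b :: Y) -> Rel a X b Y.
  by move/(_ (size X).+1 (size X) (ltnSn _)); apply.
elim=> // n IHn d Hd; apply: GL_step => a0 X0 b0 Y0 H0; apply: (IHn (size X0)) => //.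
lia.
Qed.

Lemma cancel1 a X Y : peq (a :: X) (a :: Y) -> peq X Y.
Proof.
move/GL => [Z [H1 H2]]; move: H1 H2; rewrite /cpl eqxx /= => H1 H2.
exact: peq_trans H1 (peq_sym H2).
Qed.

Lemma cancelL u X Y : peq (u ++ X) (u ++ Y) -> peq X Y.
Proof. elim: u => //= a u IH /cancel1; exact: IH. Qed.

Lemma peq_all (P : pred nat) u v : peq u v -> all P u = all P v.
Proof.
elim=> [u0|u0 v0 _ ->|u0 v0 w0 _ -> _ ->|a b u0 v0 []] //.
- move=> x y _; rewrite !all_cat /=; by case: (P x); case: (P y).
- move=> x; rewrite !all_cat /=; by case: (P x); case: (P x.+1).
Qed.

Lemma peq_rev u v : peq u v -> peq (rev u) (rev v).
Proof.
elim=> [u0|u0 v0 _ IH|u0 v0 w0 _ IH1 _ IH2|a b u0 v0 H].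
- exact: peq_refl.
- exact: peq_sym.
- exact: peq_trans IH1 IH2.
- rewrite !rev_cat; apply: peq_catr; apply: peq_catl.
  case: H => [x y Hxy|x] /=.
  + rewrite /rev /=; exact: peq_sym (peq_ctx [::] [::] (prel_comm Hxy)).
  + exact: (peq_ctx [::] [::] (prel_braid x)).
Qed.

Lemma cancelR u X Y : peq (X ++ u) (Y ++ u) -> peq X Y.
Proof.
move/peq_rev; rewrite !rev_cat => /cancelL /peq_rev; by rewrite !revK.
Qed.

Definition dvd u v := exists c, peq (u ++ c) v.

Lemma dvd_refl u : dvd u u.
Proof. by exists [::]; rewrite cats0; apply: peq_refl. Qed.
Lemma dvd_nil u : dvd [::] u.
Proof. by exists u; apply: peq_refl. Qed.
Lemma dvd_cat u c : dvd u (u ++ c).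
Proof. by exists c; apply: peq_refl. Qed.
Lemma dvd_trans u v w : dvd u v -> dvd v w -> dvd u w.
Proof.
move=> [c1 H1] [c2 H2]; exists (c1 ++ c2); rewrite catA.
exact: peq_trans (peq_catr _ H1) H2.
Qed.
Lemma dvd_peqL u u' v : peq u u' -> dvd u v -> dvd u' v.
Proof. move=> H [c Hc]; exists c; exact: peq_trans (peq_catr _ (peq_sym H)) Hc. Qed.
Lemma dvd_peqR u v v' : peq v v' -> dvd u v -> dvd u v'.
Proof. move=> H [c Hc]; exists c; exact: peq_trans Hc H. Qed.
Lemma dvd_catl p x y : dvd x y -> dvd (p ++ x) (p ++ y).
Proof. move=> [c Hc]; exists c; rewrite -catA; exact: peq_catl. Qed.
Lemma dvd_cancel p x y : dvd (p ++ x) (p ++ y) -> dvd x y.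
Proof. move=> [c Hc]; exists c; apply: (cancelL (u := p)); by rewrite catA. Qed.
Lemma dvd_peq u v : peq u v -> dvd u v.
Proof. move=> H; apply: dvd_peqR H (dvd_refl _). Qed.

Lemma cpl_lcm a b : peq (a :: cpl a b) (b :: cpl b a).
Proof.
case: (cpl_cases a b) => [[E C]|[[ne [Ha C]]|[ne [Hf [_ C]]]]].
- subst b; exact: peq_refl.
- have Hb : adj b a by rewrite adj_sym.
  have E2 : (b == a) = false by apply/eqP=> E; apply: ne.
  rewrite C /cpl Hb E2; exact: peq_br.
- have Hb : far b a by rewrite far_sym.
  have E2 : (b == a) = false by apply/eqP=> E; apply: ne.
  rewrite C /cpl (negbTE (far_nadj Hb)) E2; exact: peq_swap.
Qed.

Definition is_lcm u v L := dvd u L /\ dvd v L /\ forall Y, dvd u Y -> dvd v Y -> dvd L Y.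

Lemma lcm_ex_aux n : forall u v W, (size W < n)%N -> dvd u W -> dvd v W -> exists L, is_lcm u v L.
Proof.
elim: n => // n IH [|a u'] v W sW Hu Hv.
  exists v; split; [exact: dvd_nil|split; [exact: dvd_refl|by []]].
case: v Hv => [|b v'] Hv.
  exists (a :: u'); split; [exact: dvd_refl|split; [exact: dvd_nil|by []]].
case: (Hu) => c Hc; case: (Hv) => c' Hc'.
have [Z [H1 H2]] := GL (peq_trans Hc (peq_sym Hc')).
have sZ : (size (cpl a b ++ Z) < n)%N.
  by move: (peq_size Hc) (peq_size H1) => /=; rewrite !size_cat; lia.
have sZ' : (size (cpl b a ++ Z) < n)%N.
  by move: (peq_size Hc') (peq_size H2) => /=; rewrite !size_cat; lia.
have [c1 [Hc1a [Hc1b Hc1U]]] := IH _ _ _ sZ (ex_intro _ c H1) (dvd_cat _ _).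
have [c2 [Hc2a [Hc2b Hc2U]]] := IH _ _ _ sZ' (ex_intro _ c' H2) (dvd_cat _ _).
case: (Hc1b) => e1 He1; case: (Hc2b) => e2 He2.
have He1Z : dvd e1 Z.
  apply: (dvd_cancel (p := cpl a b)); apply: (dvd_peqL (peq_sym He1)).
  apply: Hc1U; [exact: (ex_intro _ c H1)|exact: dvd_cat].
have He2Z : dvd e2 Z.
  apply: (dvd_cancel (p := cpl b a)); apply: (dvd_peqL (peq_sym He2)).
  apply: Hc2U; [exact: (ex_intro _ c' H2)|exact: dvd_cat].
have [|e [He1e [He2e HeU]]] := IH e1 e2 Z _ He1Z He2Z.
  by move: sZ; rewrite size_cat; lia.
exists (a :: cpl a b ++ e); split; [|split].
- apply: (dvd_catl [:: a]); apply: dvd_trans Hc1a _.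
  apply: (dvd_peqL He1); exact: dvd_catl.
- apply: (dvd_peqR (peq_sym (peq_catr e (cpl_lcm a b)))).
  apply: (dvd_catl [:: b]); apply: dvd_trans Hc2a _.
  apply: (dvd_peqL He2); exact: dvd_catl.
- move=> Y [y1 Hy1] [y2 Hy2].
  have [Z' [K1 K2]] := GL (peq_trans Hy1 (peq_sym Hy2)).
  have Hd1 : dvd e1 Z'.
    apply: (dvd_cancel (p := cpl a b)); apply: (dvd_peqL (peq_sym He1)).
    apply: Hc1U; [exact: (ex_intro _ y1 K1)|exact: dvd_cat].
  have Hd2 : dvd e2 Z'.
    apply: (dvd_cancel (p := cpl b a)); apply: (dvd_peqL (peq_sym He2)).
    apply: Hc2U; [exact: (ex_intro _ y2 K2)|exact: dvd_cat].
  apply: (dvd_peqR Hy1); apply: (dvd_peqR (peq_cons a (peq_sym K1))).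
  apply: (dvd_catl (a :: cpl a b)); exact: HeU.
Qed.

Lemma lcm_ex u v W : dvd u W -> dvd v W -> exists L, is_lcm u v L.
Proof. exact: (@lcm_ex_aux (size W).+1). Qed.

Definition is_gcd a b g := dvd g a /\ dvd g b /\ forall u, dvd u a -> dvd u b -> dvd u g.

Lemma gcd_ex_aux n : forall a b, (size a < n)%N -> exists g, is_gcd a b g.
Proof.
elim: n => // n IH a b sa.
case: (classic (exists x, dvd [:: x] a /\ dvd [:: x] b)) => [[x [[a' Ha] [b' Hb]]]|Hn].
- have [|g' [Hga [Hgb HgU]]] := IH a' b'.
    by move: (peq_size Ha) => /= E; lia.
  exists (x :: g'); split; [|split].
  + apply: (dvd_peqR Ha); exact: (dvd_catl [:: x]).
  + apply: (dvd_peqR Hb); exact: (dvd_catl [:: x]).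
  + move=> u Hu Hub.
    have [L [HuL [HxL HLU]]] := lcm_ex Hu (ex_intro _ a' Ha).
    case: HxL => w Hw.
    have HwA : dvd w a'.
      apply: (dvd_cancel (p := [:: x])); apply: (dvd_peqL (peq_sym Hw)).
      apply: (dvd_peqR (peq_sym Ha)); apply: HLU => //; exact: (ex_intro _ a' Ha).
    have HwB : dvd w b'.
      apply: (dvd_cancel (p := [:: x])); apply: (dvd_peqL (peq_sym Hw)).
      apply: (dvd_peqR (peq_sym Hb)); apply: HLU => //; exact: (ex_intro _ b' Hb).
    apply: dvd_trans HuL _; apply: (dvd_peqL Hw); apply: (dvd_catl [:: x]); exact: HgU.
- exists [::]; split; [exact: dvd_nil|split; [exact: dvd_nil|]].
  move=> [|x u'] Hu Hub; first exact: dvd_refl.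
  exfalso; apply: Hn; exists x; split.
  + apply: dvd_trans Hu; exact: dvd_cat.
  + apply: dvd_trans Hub; exact: dvd_cat.
Qed.

Lemma gcd_ex a b : exists g, is_gcd a b g.
Proof. exact: (@gcd_ex_aux (size a).+1). Qed.

Definition Bk (k : nat) : seq nat := rev (iota 0 k.+1).
Definition DN (N : nat) : seq nat := flatten [seq rev (iota 0 k.+1) | k <- iota 0 N].

Lemma DN_S N : DN N.+1 = DN N ++ Bk N.
Proof. by rewrite /DN -addn1 iotaD map_cat flatten_cat /= cats0. Qed.

Lemma Bk_S k : Bk k.+1 = k.+1 :: Bk k.
Proof. by rewrite /Bk -addn1 iotaD rev_cat /=. Qed.

Lemma Bk_all k : all (fun x => x <= k)%N (Bk k).
Proof. rewrite /Bk all_rev; apply/allP=> x; rewrite mem_iota; lia. Qed.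

Lemma DN_all N : all (fun x => x < N)%N (DN N).
Proof.
elim: N => // N IH; rewrite DN_S all_cat; apply/andP; split.
- apply: sub_all IH => x /=; lia.
- apply: sub_all (Bk_all N) => x /=; lia.
Qed.

Lemma far_commR x w : all (far x) w -> peq (w ++ [:: x]) (x :: w).
Proof. move=> H; apply: peq_sym; have := far_allswap [::] H; by rewrite cats0. Qed.

Lemma Bk_shift k i : (i < k)%N -> peq (Bk k ++ [:: i.+1]) (i :: Bk k).
Proof.
elim: k i => // k IH i Hi; rewrite Bk_S /=.
case: (ltnP i k) => Hik.
- have H := IH i Hik.
  apply: peq_trans (peq_cons _ H) _.
  apply: peq_swap; rewrite /far; lia.
- have -> : i = k by lia.
  case: k IH Hi Hik => [|k] IH Hi Hik /=.
  + rewrite /Bk /=. exact: (peq_br [::] (a := 1) (b := 0)).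
  + rewrite Bk_S /=.
    apply: peq_trans (peq_cons _ (peq_cons _ (far_commR _))) _.
      apply: sub_all (Bk_all k) => x /=; rewrite /far; lia.
    apply: peq_br; rewrite /adj; lia.
Qed.

Lemma C_shift k i : (i < k)%N -> peq (iota 0 k.+1 ++ [:: i]) (i.+1 :: iota 0 k.+1).
Proof.
move/Bk_shift/peq_rev; rewrite rev_cat /= rev_cons /Bk revK -cats1.
exact: peq_sym.
Qed.

Lemma DN_C N : peq (DN N.+1) (iota 0 N.+1 ++ DN N).
Proof.
elim: N => [|N IH]; first exact: peq_refl.
rewrite DN_S; apply: peq_trans (peq_catr _ IH) _.
have E : iota 0 N.+2 = iota 0 N.+1 ++ [:: N.+1] by rewrite -addn1 iotaD.
rewrite E -!catA DN_S Bk_S; apply: peq_catl.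
rewrite -cat1s catA [in X in peq _ X]catA; apply: peq_catr.
apply: far_commR; apply: sub_all (DN_all N) => x /=; rewrite /far; lia.
Qed.

Definition tau (N i : nat) := (N.-1 - i)%N.

Lemma D3 N i : (i < N)%N -> peq (DN N ++ [:: i]) (tau N i :: DN N).
Proof.
rewrite /tau; elim: N i => // N IH i Hi.
case: i Hi => [|i] Hi.
- case: N IH Hi => [|N] IH Hi; first exact: peq_refl.
  have S1 := peq_catr [:: 0] (DN_C N.+1).
  have S2 := peq_catl (iota 0 N.+2) (IH 0 isT).
  have S3 := peq_catr (DN N.+1) (C_shift (ltnSn N)).
  have S4 := peq_cons N.+1 (peq_sym (DN_C N.+1)).
  have E : (N.+1.-1 - 0 = N)%N by lia.
  rewrite -catA in S1; rewrite -catA in S3; rewrite E in S2.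
  apply: peq_trans S1 _; apply: peq_trans S2 _; apply: peq_trans S3 _.
  have -> : (N.+2.-1 - 0 = N.+1)%N by lia.
  exact: S4.
- have Hi' : (i < N)%N by [].
  rewrite DN_S -catA.
  apply: peq_trans (peq_catl _ (Bk_shift Hi')) _.
  rewrite -cat1s catA; apply: peq_trans (peq_catr _ (IH i Hi')) _.
  have -> : (N.+1.-1 - i.+1 = N.-1 - i)%N by lia.
  exact: peq_refl.
Qed.

Definition taus N (w : seq nat) := map (tau N) w.

Lemma D3w N x : all (fun i => i < N)%N x -> peq (DN N ++ x) (taus N x ++ DN N).
Proof.
elim: x => [|i x IH] /=; first by move=> _; rewrite cats0; exact: peq_refl.
case/andP=> Hi Hx.
rewrite -cat1s catA; apply: peq_trans (peq_catr _ (D3 Hi)) _ => /=.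
exact: peq_cons (IH Hx).
Qed.

Lemma tauK N i : (i < N)%N -> tau N (tau N i) = i.
Proof. rewrite /tau; lia. Qed.
Lemma tau_lt N i : (i < N)%N -> (tau N i < N)%N.
Proof. rewrite /tau; lia. Qed.
Lemma tausK N x : all (fun i => i < N)%N x -> taus N (taus N x) = x.
Proof. elim: x => //= i x IH /andP [Hi Hx]; by rewrite tauK // IH. Qed.
Lemma taus_all N x : all (fun i => i < N)%N x -> all (fun i => i < N)%N (taus N x).
Proof. elim: x => //= i x IH /andP [Hi Hx]; by rewrite tau_lt // IH. Qed.
Lemma taus_cat N x y : taus N (x ++ y) = taus N x ++ taus N y.
Proof. exact: map_cat. Qed.

Lemma taus_peq N u v : peq u v -> all (fun i => i < N)%N u -> peq (taus N u) (taus N v).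
Proof.
elim=> [u0|u0 v0 H0 IH|u0 v0 w0 H1 IH1 H2 IH2|a b u0 v0 H] Hall.
- exact: peq_refl.
- apply: peq_sym; apply: IH; by rewrite (peq_all _ H0).
- apply: peq_trans (IH1 Hall) (IH2 _); by rewrite -(peq_all _ H1).
- rewrite !taus_cat; apply: peq_cat3.
  move: Hall; rewrite !all_cat => /and3P [_ Hu _].
  case: H Hu => [x y Hxy|x] /= Hu.
  + have := peq_swap [::] (a := tau N x) (b := tau N y).
    by rewrite /far /tau; move: Hu; rewrite /= !andbT => /andP [Hx Hy] H; apply: H; lia.
  + have := peq_br [::] (a := tau N x) (b := tau N x.+1).
    by rewrite /adj /tau; move: Hu; rewrite /= !andbT => /andP [Hx Hy] H; apply: H; lia.
Qed.

Lemma tau_DN N : peq (DN N) (taus N (DN N)).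
Proof. apply: (cancelR (u := DN N)); exact: D3w (DN_all N). Qed.

Lemma D2 N i : (i < N)%N -> dvd [:: i] (DN N).
Proof.
elim: N i => // N IH i Hi.
case: (ltnP i N) => Hin.
- rewrite DN_S; apply: dvd_trans (IH i Hin) (dvd_cat _ _).
- have -> : i = N by lia.
  apply: (dvd_peqR (peq_sym (tau_DN N.+1))).
  have -> : DN N.+1 = 0 :: (behead (DN N.+1)).
    by case: N {IH Hi Hin} => [|N] //; rewrite /DN.
  by rewrite /taus /= /tau subn0; exact: dvd_cat.
Qed.

Lemma D3w' N x : all (fun i => i < N)%N x -> peq (DN N ++ taus N x) (x ++ DN N).
Proof.
move=> H; have := D3w (taus_all H); by rewrite tausK.
Qed.

Section Embed.
Variable N : nat.
Variable A : nat -> seq nat.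
Hypothesis HA : forall i, (i < N)%N -> peq (i :: A i) (DN N).

Local Notation vd m := (all (fun i => i < N)%N m).

Lemma HA_all i : (i < N)%N -> vd (A i).
Proof.
move=> Hi; have := peq_all (fun i => i < N)%N (HA Hi).
by rewrite /= Hi DN_all.
Qed.

Lemma HA' i : (i < N)%N -> peq (A i ++ [:: tau N i]) (DN N).
Proof.
move=> Hi; apply: (cancel1 (a := i)).
have := peq_catr [:: tau N i] (HA Hi) => /= H; apply: peq_trans H _.
have := D3 (tau_lt Hi); rewrite tauK //.
Qed.

Definition DP k := flatten (nseq k (DN N)).
Lemma DP_add a b : DP a ++ DP b = DP (a + b).
Proof. by rewrite /DP nseqD flatten_cat. Qed.
Lemma DP_comm a b : DP a ++ DP b = DP b ++ DP a.
Proof. by rewrite !DP_add addnC. Qed.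
Lemma DP_S k : DP k.+1 = DP k ++ DN N.
Proof. by rewrite -addn1 -DP_add /DP /= cats0. Qed.

Definition st := (nat * seq nat)%type.
Definition step (s : st) (x : nat * bool) : st :=
  if x.2 then (s.1, s.2 ++ [:: x.1]) else (s.1.+1, taus N (s.2 ++ A x.1)).
Definition run (s : st) (w : seq (nat * bool)) := foldl step s w.
Definition eqst (s s' : st) := peq (DP s'.1 ++ s.2) (DP s.1 ++ s'.2).
Definition vw (w : seq (nat * bool)) := all (fun x => x.1 < N)%N w.

Lemma eqst_refl s : eqst s s.
Proof. exact: peq_refl. Qed.
Lemma eqst_sym s s' : eqst s s' -> eqst s' s.
Proof. exact: peq_sym. Qed.
Lemma eqst_trans s s' s'' : eqst s s' -> eqst s' s'' -> eqst s s''.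
Proof.
case: s s' s'' => [k m] [k' m'] [k'' m'']; rewrite /eqst /= => H1 H2.
apply: (cancelL (u := DP k')).
rewrite !catA [DP k' ++ DP k'']DP_comm -catA.
apply: peq_trans (peq_catl _ H1) _.
rewrite !catA [DP k'' ++ DP k]DP_comm -!catA.
apply: peq_trans (peq_catl _ H2) _.
rewrite !catA [DP k ++ DP k']DP_comm; exact: peq_refl.
Qed.

Lemma step_vd s x : (x.1 < N)%N -> vd s.2 -> vd (step s x).2.
Proof.
case: s x => k m [i []] /= Hi Hm.
- by rewrite all_cat Hm /= Hi.
- apply: taus_all; by rewrite all_cat Hm HA_all.
Qed.

Lemma run_vd s w : vw w -> vd s.2 -> vd (run s w).2.
Proof.
elim: w s => //= x w IH s /andP [Hx Hw] Hs; apply: IH => //; exact: step_vd.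
Qed.

Lemma step_resp s s' x : (x.1 < N)%N -> vd s.2 -> vd s'.2 -> eqst s s' ->
  eqst (step s x) (step s' x).
Proof.
case: s s' x => [k m] [k' m'] [i []] /= Hi Hm Hm'; rewrite /eqst /step /= => H.
- rewrite !catA; exact: peq_catr.
- have Vm : vd (m ++ A i) by rewrite all_cat Hm HA_all.
  have Vm' : vd (m' ++ A i) by rewrite all_cat Hm' HA_all.
  rewrite !DP_S -!catA.
  apply: peq_trans (peq_catl _ (D3w' Vm)) _.
  apply: peq_trans _ (peq_catl _ (peq_sym (D3w' Vm'))).
  rewrite !catA; apply: peq_catr; apply: peq_catr; exact: H.
Qed.

Lemma run_resp s s' w : vw w -> vd s.2 -> vd s'.2 -> eqst s s' -> eqst (run s w) (run s' w).
Proof.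
elim: w s s' => //= x w IH s s' /andP [Hx Hw] Hs Hs' H.
apply: IH => //; try exact: step_vd.
exact: step_resp.
Qed.

Lemma tauDN_peq m : vd m -> peq (DP 0 ++ taus N (m ++ DN N)) (DN N ++ m).
Proof.
move=> Hm; rewrite /= taus_cat.
apply: peq_trans (peq_catl _ (peq_sym (tau_DN N))) _.
exact: peq_sym (D3w Hm).
Qed.

Lemma free_ok s i e : vd s.2 -> (i < N)%N -> eqst (run s [:: (i, e); (i, ~~ e)]) s.
Proof.
case: s => k m /= Hm Hi; rewrite /eqst /run /=.
have Hmi : vd (m ++ [:: i]) by rewrite all_cat Hm /= Hi.
case: e => /=.
- rewrite DP_S -(catA (DP k)); apply: peq_catl.
  have H1 : peq ((m ++ [:: i]) ++ A i) (m ++ DN N).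
    by rewrite -catA; apply: peq_catl; exact: HA.
  have Vl : vd ((m ++ [:: i]) ++ A i) by rewrite all_cat Hmi HA_all.
  apply: peq_trans (taus_peq H1 Vl) _.
  exact: (tauDN_peq Hm).
- rewrite DP_S -(catA (DP k)); apply: peq_catl.
  have E : taus N (m ++ A i) ++ [:: i] = taus N (m ++ A i ++ [:: tau N i]).
    by rewrite !taus_cat /taus /= tauK // catA.
  rewrite E.
  have H1 : peq (m ++ A i ++ [:: tau N i]) (m ++ DN N) by apply: peq_catl; exact: HA'.
  have Vl : vd (m ++ A i ++ [:: tau N i]).
    by rewrite !all_cat Hm HA_all //= tau_lt.
  apply: peq_trans (taus_peq H1 Vl) _.
  exact: (tauDN_peq Hm).
Qed.

Lemma pos_ok s u v : prel u v -> eqst (run s [seq (i, true) | i <- u]) (run s [seq (i, true) | i <- v]).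
Proof.
case: s => k m; rewrite /eqst /run.
have Hr : forall w k m, foldl step (k, m) [seq (i, true) | i <- w] = (k, m ++ w).
  elim=> [|x w IH] k0 m0 /=; first by rewrite cats0.
  by rewrite IH -catA.
rewrite !Hr /= => H; rewrite !catA; apply: peq_catl; have := peq_ctx [::] [::] H; by rewrite /= !cats0.
Qed.

End Embed.

Section G.
Variable n : nat.
Local Notation N := n.-1.

Definition tr (w : word n) : seq (nat * bool) := [seq (val x.1, x.2) | x <- w].
Definition pv (w : word n) : seq nat := [seq val x.1 | x <- w].
Definition lift (m : seq nat) : word n :=
  [seq (i, true) | i <- pmap (@insub nat (fun k => k < n.-1)%N 'I_n.-1) m].
Definition posw (w : word n) := all (fun x => x.2) w.

Lemma Delta_lift : Delta n = lift (DN N).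
Proof. by []. Qed.

Lemma tr_cat u v : tr (u ++ v) = tr u ++ tr v.
Proof. exact: map_cat. Qed.
Lemma lift_cat u v : lift (u ++ v) = lift u ++ lift v.
Proof. by rewrite /lift pmap_cat map_cat. Qed.
Lemma tr_vw w : vw N (tr w).
Proof. by apply/allP=> x /mapP [y _ ->] /=. Qed.
Lemma pv_all w : all (fun i => i < N)%N (pv w).
Proof. by apply/allP=> x /mapP [y _ ->] /=. Qed.

Lemma pv_lift m : all (fun i => i < N)%N m -> pv (lift m) = m.
Proof.
elim: m => //= x m IH /andP [Hx Hm].
by rewrite /lift /= insubT /= -/(lift m) IH.
Qed.

Lemma lift_pv w : posw w -> lift (pv w) = w.
Proof.
elim: w => //= [[i b] w] IH /andP [/= Hb Hw]; case: b Hb => // _.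
rewrite /lift /= (insubT (fun k => k < n.-1)%N (ltn_ord i)) /= -/(lift _) IH //.
by congr ((_, true) :: w); apply: val_inj.
Qed.

Lemma posw_lift m : posw (lift m).
Proof. by apply/allP=> x /mapP [y _ ->]. Qed.
Lemma posw_cat u v : posw u -> posw v -> posw (u ++ v).
Proof. by rewrite /posw all_cat => -> ->. Qed.

Lemma tr_pos w : posw w -> tr w = [seq (i, true) | i <- pv w].
Proof. by elim: w => //= [[i b] w] IH /andP [/= -> Hw]; rewrite IH. Qed.

Lemma breq_cat3 (a b u v : word n) : breq u v -> breq (a ++ u ++ b) (a ++ v ++ b).
Proof.
elim=> [u0|u0 v0 _ IH|u0 v0 w0 _ IH1 _ IH2|a0 b0 u0 v0 H].
- exact: breq_refl.
- exact: breq_sym.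
- exact: breq_trans IH1 IH2.
- have := breq_ctx (a ++ a0) (b0 ++ b) H.
  by rewrite !catA -!(catA _ _ b0) -!(catA _ _ b).
Qed.
Lemma breq_catl (a u v : word n) : breq u v -> breq (a ++ u) (a ++ v).
Proof. by move=> H; have := breq_cat3 a [::] H; rewrite !cats0. Qed.
Lemma breq_catr (b u v : word n) : breq u v -> breq (u ++ b) (v ++ b).
Proof. by move=> H; have := breq_cat3 [::] b H. Qed.
Lemma breq_cat (u u' v v' : word n) : breq u u' -> breq v v' -> breq (u ++ v) (u' ++ v').
Proof. move=> H1 H2; apply: breq_trans (breq_catr v H1) _; exact: breq_catl. Qed.

Lemma winv_cat (u v : word n) : winv (u ++ v) = winv v ++ winv u.
Proof. by rewrite /winv map_cat rev_cat. Qed.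
Lemma winvK (w : word n) : winv (winv w) = w.
Proof. by rewrite /winv map_rev revK -map_comp map_id_in // => [[i b]] _ /=; rewrite negbK. Qed.

Lemma breq_winvR (w : word n) : breq (w ++ winv w) [::].
Proof.
elim: w => [|x w IH] /=; first exact: breq_refl.
rewrite /winv /= rev_cons -/(winv w) -cats1.
have E : x :: w ++ winv w ++ [:: (x.1, ~~ x.2)] = [:: x] ++ (w ++ winv w) ++ [:: (x.1, ~~ x.2)].
  by rewrite /= catA.
rewrite E; apply: breq_trans (breq_cat3 [:: x] [:: (x.1, ~~ x.2)] IH) _ => /=.
case: x {E IH} => i b /=; have := breq_ctx [::] [::] (brel_free i b); by rewrite /= .
Qed.
Lemma breq_winvL (w : word n) : breq (winv w ++ w) [::].
Proof. have := breq_winvR (winv w); by rewrite winvK. Qed.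

Lemma breq_cancelL (a u v : word n) : breq (a ++ u) (a ++ v) -> breq u v.
Proof.
move=> H.
have H1 := breq_catr u (breq_winvL a); rewrite -catA /= in H1.
have H2 := breq_catr v (breq_winvL a); rewrite -catA /= in H2.
apply: breq_trans (breq_sym H1) _; apply: breq_trans _ H2; exact: breq_catl.
Qed.
End G.

Import GRing.Theory.

Section Pow.
Variable n : nat.
Variable w : word n.
Local Notation F m := (flatten (nseq m w)).
Local Notation G m := (flatten (nseq m (winv w))).

Lemma flat_nseqS (x : word n) m : flatten (nseq m.+1 x) = flatten (nseq m x) ++ x.
Proof. by rewrite -addn1 nseqD flatten_cat /= cats0. Qed.

Lemma FG a c : breq (F a ++ G c) (wpowz w (Posz a - Posz c)).
Proof.
elim: c a => [|c IH] a.
  by rewrite subr0 cats0; exact: breq_refl.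
case: a => [|a].
  have -> : (Posz 0 - Posz c.+1 = Negz c)%R by rewrite NegzE; lia.
  exact: breq_refl.
have -> : (Posz a.+1 - Posz c.+1 = Posz a - Posz c)%R by lia.
apply: breq_trans (IH a).
rewrite flat_nseqS /= -catA; apply: breq_catl; rewrite catA.
have := breq_catr (flatten (nseq c (winv w))) (breq_winvR w); by rewrite /=.
Qed.

Lemma GF a c : breq (G c ++ F a) (wpowz w (Posz a - Posz c)).
Proof.
elim: c a => [|c IH] a.
  by rewrite subr0 /=; exact: breq_refl.
case: a => [|a].
  rewrite cats0; have -> : (Posz 0 - Posz c.+1 = Negz c)%R by rewrite NegzE; lia.
  exact: breq_refl.
have -> : (Posz a.+1 - Posz c.+1 = Posz a - Posz c)%R by lia.
apply: breq_trans (IH a).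
rewrite flat_nseqS /= -catA; apply: breq_catl; rewrite catA.
have := breq_catr (flatten (nseq a w)) (breq_winvL w); by rewrite /=.
Qed.

Lemma pow_add a b : breq (wpowz w a ++ wpowz w b) (wpowz w (a + b)).
Proof.
case: a => a; case: b => b /=.
- rewrite -flatten_cat -nseqD; exact: breq_refl.
- have -> : (Posz a + Negz b = Posz a - Posz b.+1)%R by rewrite NegzE.
  exact: (FG a b.+1).
- have -> : (Negz a + Posz b = Posz b - Posz a.+1)%R by rewrite NegzE addrC.
  exact: (GF b a.+1).
- have -> : (winv w ++ G a) ++ winv w ++ G b = winv w ++ winv w ++ G (a + b).
    rewrite -catA; congr (_ ++ _); rewrite catA -flat_nseqS /= -catA.
    by rewrite -flatten_cat -nseqD.
  exact: breq_refl.
Qed.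

Lemma pow0 : wpowz w 0 = [::].
Proof. by []. Qed.
End Pow.

Section Main.
Variable n : nat.
Local Notation N := n.-1.
Local Notation vd m := (all (fun i => i < n.-1)%N m).

Lemma A_ex : exists A : nat -> seq nat, forall i, (i < N)%N -> peq (i :: A i) (DN N).
Proof.
have H : forall i, exists a, (i < N)%N -> peq (i :: a) (DN N).
  move=> i; case: (ltnP i N) => Hi.
  - by case: (D2 Hi) => c Hc; exists c.
  - by exists [::] => H; move: H Hi; lia.
exists (fun i => proj1_sig (constructive_indefinite_description _ (H i))).
move=> i; exact: (proj2_sig (constructive_indefinite_description _ (H i))).
Qed.

Lemma run_pos A k m (l : seq nat) : run N A (k, m) [seq (i, true) | i <- l] = (k, m ++ l).
Proof.
elim: l k m => [|x l IH] k m /=; first by rewrite cats0.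
by rewrite /run /= -/(run _ _ _ _) IH -catA.
Qed.

Lemma breq_run A (HA : forall i, (i < N)%N -> peq (i :: A i) (DN N)) (u v : word n) :
  breq u v -> forall s, vd s.2 -> eqst N (run N A s (tr u)) (run N A s (tr v)).
Proof.
elim=> [u0|u0 v0 _ IH|u0 v0 w0 _ IH1 _ IH2|a b u0 v0 H] s Hs.
- exact: eqst_refl.
- exact: eqst_sym (IH s Hs).
- apply: eqst_trans (IH1 s Hs) (IH2 s Hs).
- rewrite !tr_cat /run !foldl_cat -!/(run _ _ _ _).
  have Va := run_vd HA (tr_vw a) Hs.
  apply: run_resp => //; try apply: run_vd => //; try exact: tr_vw.
  case: H => [i e|i j Hij|i j Hij].
  + have H := @free_ok N A HA _ (val i) e Va (ltn_ord i); exact: H.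
  + have H := @pos_ok N A (run N A s (tr a)) _ _ (prel_comm Hij); exact: H.
  + have E1 : tr [:: (i, true); (j, true); (i, true)] = [seq (x, true) | x <- [:: val i; (val i).+1; val i]].
      by rewrite /tr /= Hij.
    have E2 : tr [:: (j, true); (i, true); (j, true)] = [seq (x, true) | x <- [:: (val i).+1; val i; (val i).+1]].
      by rewrite /tr /= Hij.
    rewrite E1 E2.
    exact: (@pos_ok N A _ _ _ (prel_braid _)).
Qed.

Lemma breq_pos (u v : word n) : posw u -> posw v -> breq u v -> peq (pv u) (pv v).
Proof.
move=> Hu Hv H; have [A HA] := A_ex.
have := breq_run HA H (s := (0, [::])) isT.
by rewrite !tr_pos // !run_pos /eqst /=.
Qed.

Lemma lift_peq m m' : peq m m' -> vd m -> breq (lift n m) (lift n m').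
Proof.
elim=> [u0|u0 v0 H0 IH|u0 v0 w0 H1 IH1 H2 IH2|a b u0 v0 H] Hall.
- exact: breq_refl.
- apply: breq_sym; apply: IH; by rewrite (peq_all _ H0).
- apply: breq_trans (IH1 Hall) (IH2 _); by rewrite -(peq_all _ H1).
- rewrite !lift_cat; apply: breq_cat3.
  move: Hall; rewrite !all_cat => /and3P [_ Hu _].
  case: H Hu => [x y Hxy|x] /= /and3P [Hx Hy _].
  + rewrite /lift /= (insubT (fun k => k < n.-1)%N Hx) (insubT (fun k => k < n.-1)%N Hy) /=.
    exact: (breq_ctx [::] [::] (brel_comm (i := Ordinal Hx) (j := Ordinal Hy) Hxy)).
  + rewrite /lift /= (insubT (fun k => k < n.-1)%N Hx) (insubT (fun k => k < n.-1)%N Hy) /=.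
    exact: (breq_ctx [::] [::] (brel_braid (i := Ordinal Hx) (j := Ordinal Hy) erefl)).
Qed.

Lemma is_pos_breq (x y : word n) : breq x y -> is_pos x -> is_pos y.
Proof. move=> H [p [Hp Hxp]]; exists p; split=> //; exact: breq_trans (breq_sym H) Hxp. Qed.

Lemma is_pos_lift m : is_pos (lift n m).
Proof. exists (lift n m); split; [exact: posw_lift|exact: breq_refl]. Qed.

Lemma pos_rep (x : word n) : is_pos x -> exists m, vd m /\ breq x (lift n m).
Proof.
move=> [p [Hp Hxp]]; exists (pv p); split; first exact: pv_all.
by rewrite lift_pv.
Qed.

Lemma is_pos_cat (x y : word n) : is_pos x -> is_pos y -> is_pos (x ++ y).
Proof.
move=> [p [Hp Hx]] [q [Hq Hy]]; exists (p ++ q); split; first exact: posw_cat.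
exact: breq_cat.
Qed.

Lemma is_pos_nil : is_pos ([::] : word n).
Proof. by exists [::]; split=> //; exact: breq_refl. Qed.

Lemma breq_winv (a a' : word n) : breq a a' -> breq (winv a) (winv a').
Proof.
move=> H.
have H1 : breq (winv a) (winv a ++ a' ++ winv a').
  have := breq_catl (winv a) (breq_sym (breq_winvR a')); by rewrite cats0.
apply: breq_trans H1 _.
rewrite catA; have := breq_catr (winv a') (breq_catl (winv a) (breq_sym H)).
move/breq_trans; apply.
have := breq_catr (winv a') (breq_winvL a); by rewrite /=.
Qed.

Definition leG (a b : word n) := is_pos (winv a ++ b).

Lemma leG_breqL a a' b : breq a a' -> leG a b -> leG a' b.
Proof. move=> H; apply: is_pos_breq; apply: breq_catr; exact: breq_winv. Qed.
Lemma leG_breqR a b b' : breq b b' -> leG a b -> leG a b'.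
Proof. move=> H; apply: is_pos_breq; exact: breq_catl. Qed.
Lemma leG_refl a : leG a a.
Proof. apply: is_pos_breq is_pos_nil; exact: breq_sym (breq_winvL a). Qed.
Lemma leG_trans a b c : leG a b -> leG b c -> leG a c.
Proof.
move=> H1 H2; have := is_pos_cat H1 H2; apply: is_pos_breq.
rewrite -catA; apply: breq_catl; rewrite catA.
have := breq_catr c (breq_winvR b); by rewrite /=.
Qed.
Lemma leG_catl a b c : leG a b -> leG (c ++ a) (c ++ b).
Proof.
apply: is_pos_breq; rewrite winv_cat -catA; apply: breq_catl; rewrite catA.
apply: breq_sym; have := breq_catr b (breq_winvL c); by rewrite /=.
Qed.
Lemma leG_pos a : is_pos a -> leG [::] a.
Proof. by rewrite /leG. Qed.

Lemma dvd_vd m m' : vd m' -> dvd m m' -> vd m /\ forall c, peq (m ++ c) m' -> vd c.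
Proof.
move=> Hm' [c Hc]; have := peq_all (fun i => i < n.-1)%N Hc; rewrite Hm' all_cat => /andP [-> _].
split=> // c' Hc'; have := peq_all (fun i => i < n.-1)%N Hc'; by rewrite Hm' all_cat => /andP [_ ->].
Qed.

Lemma leG_lift m m' : vd m -> vd m' -> leG (lift n m) (lift n m') -> dvd m m'.
Proof.
move=> Hm Hm' /pos_rep [c [Hc H]].
have H' : breq (lift n m') (lift n (m ++ c)).
  rewrite lift_cat; apply: (breq_cancelL (a := winv (lift n m))).
  apply: breq_trans H _; rewrite catA.
  have := breq_catr (lift n c) (breq_winvL (lift n m)); by move/breq_sym.
have := breq_pos (posw_lift _ _) (posw_lift _ _) H'.
rewrite !pv_lift ?all_cat ?Hm ?Hc // => Hp.
by exists c; apply: peq_sym.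
Qed.

Lemma lift_leG m m' : vd m' -> dvd m m' -> leG (lift n m) (lift n m').
Proof.
move=> Hm' Hd; have [Hm Hc] := dvd_vd Hm' Hd; case: Hd => c Hcc.
have Vmc : vd (m ++ c) by rewrite all_cat Hm (Hc c Hcc).
have := lift_peq Hcc Vmc; rewrite lift_cat => H.
apply: is_pos_breq (is_pos_lift c).
apply: breq_trans _ (breq_catl _ H); rewrite catA.
apply: breq_sym; have := breq_catr (lift n c) (breq_winvL (lift n m)); by rewrite /=.
Qed.

Lemma ggcd m1 m2 : vd m1 -> vd m2 -> exists g, vd g /\ dvd g m1 /\ dvd g m2 /\
  leG (lift n g) (lift n m1) /\ leG (lift n g) (lift n m2) /\
  (forall u, is_pos u -> leG u (lift n m1) -> leG u (lift n m2) -> leG u (lift n g)).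
Proof.
move=> H1 H2; have [g [Hg1 [Hg2 HgU]]] := gcd_ex m1 m2.
have Vg : vd g by case: (dvd_vd H1 Hg1).
exists g; split=> //; split=> //; split=> //; split; first exact: lift_leG.
split; first exact: lift_leG.
move=> u /pos_rep [mu [Vmu Hu]] K1 K2.
apply: leG_breqL (breq_sym Hu) _.
apply: lift_leG => //; apply: HgU; apply: leG_lift => //.
- exact: leG_breqL Hu K1.
- exact: leG_breqL Hu K2.
Qed.

Lemma conjD_pos (x : word n) : is_pos x -> is_pos (Delta n ++ x ++ winv (Delta n)).
Proof.
move=> /pos_rep [m [Vm Hx]].
have V : vd (DN N ++ m) by rewrite all_cat DN_all Vm.
have H := lift_peq (D3w Vm) V.
rewrite !lift_cat -Delta_lift in H.
apply: is_pos_breq (is_pos_lift (taus N m)).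
apply: breq_sym; apply: breq_trans (breq_catl _ (breq_catr _ Hx)) _.
rewrite catA; apply: breq_trans (breq_catr _ H) _; rewrite -catA.
have := breq_catl (lift n (taus N m)) (breq_winvR (Delta n)); by rewrite cats0.
Qed.

Lemma conjDi_pos (x : word n) : is_pos x -> is_pos (winv (Delta n) ++ x ++ Delta n).
Proof.
move=> /pos_rep [m [Vm Hx]].
have Vt : vd (taus N m) by exact: taus_all.
have V : vd (DN N ++ taus N m) by rewrite all_cat DN_all Vt.
have H := lift_peq (D3w' Vm) V.
rewrite !lift_cat -Delta_lift in H.
apply: is_pos_breq (is_pos_lift (taus N m)).
apply: breq_sym; apply: breq_trans (breq_catl _ (breq_catr _ Hx)) _.
apply: breq_trans (breq_catl _ (breq_sym H)) _; rewrite catA.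
have := breq_catr (lift n (taus N m)) (breq_winvL (Delta n)); by rewrite /=.
Qed.

Lemma conj_nseq (e : word n) k : (forall x, is_pos x -> is_pos (e ++ x ++ winv e)) ->
  forall x, is_pos x -> is_pos (flatten (nseq k e) ++ x ++ winv (flatten (nseq k e))).
Proof.
move=> He; elim: k => [|k IH] x Hx /=; first by rewrite cats0.
rewrite winv_cat -!catA; have := He _ (IH x Hx); by rewrite -!catA.
Qed.

Lemma conj_pow (z : int) (x : word n) : is_pos x ->
  is_pos (wpowz (Delta n) z ++ x ++ winv (wpowz (Delta n) z)).
Proof.
case: z => m /=.
- apply: conj_nseq; exact: conjD_pos.
- apply: (@conj_nseq (winv (Delta n)) m.+1) => y Hy.
  rewrite winvK; exact: conjDi_pos.
Qed.

Lemma pow_pos m : is_pos (wpowz (Delta n) (Posz m)).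
Proof.
elim: m => [|m IH] /=; first exact: is_pos_nil.
apply: is_pos_cat IH; rewrite Delta_lift; exact: is_pos_lift.
Qed.

Lemma inf_ge_iff (j : int) (x : word n) :
  inf_ge j x <-> is_pos (wpowz (Delta n) (- j) ++ x).
Proof.
split.
- move=> [k [Hjk [p [Hp Hx]]]].
  apply: is_pos_breq (breq_catl _ (breq_sym Hx)) _; rewrite catA.
  apply: is_pos_breq (breq_catr _ (breq_sym (pow_add _ _ _))) _.
  apply: is_pos_cat Hp.
  have [m Em] : exists m, (- j + k = Posz m)%R.
    case E: (- j + k)%R => [m|m]; first by exists m.
    by move: E Hjk; rewrite NegzE; lia.
  rewrite Em; exact: pow_pos.
- move=> H; exists j; split=> //; exists (wpowz (Delta n) (- j) ++ x); split=> //.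
  rewrite catA; apply: breq_trans (breq_catr _ (breq_sym (pow_add _ _ _))).
  rewrite subrr /=; exact: breq_refl.
Qed.
End Main.

Section Final.
Variable n : nat.
Local Notation N := n.-1.
Local Notation vd m := (all (fun i => i < n.-1)%N m).

Lemma leG_ex (a b : word n) : leG a b -> exists q, is_pos q /\ breq (a ++ q) b.
Proof.
move=> H; exists (winv a ++ b); split=> //; rewrite catA.
have := breq_catr b (breq_winvR a); by rewrite /=.
Qed.

Lemma breq_conj (a a' y : word n) : breq a a' -> breq (winv a ++ y ++ a) (winv a' ++ y ++ a').
Proof. move=> H; apply: breq_cat (breq_winv H) _; apply: breq_catl; exact: H. Qed.

Section Phi.
Variable z : int.
Local Notation E := (wpowz (Delta n) z).
Definition phi (x : word n) := E ++ x ++ winv E.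

Lemma phi_pos x : is_pos x -> is_pos (phi x).
Proof. exact: conj_pow. Qed.

Lemma phi_mono a b : leG a b -> leG (phi a) (phi b).
Proof.
move=> H; apply: (is_pos_breq _ (phi_pos H)).
rewrite /phi !winv_cat winvK -!catA; apply: breq_catl; apply: breq_catl.
apply: breq_sym; move: (breq_catr (b ++ winv E) (breq_winvL E)); by rewrite -catA.
Qed.

Lemma phi_eq (a y : word n) : breq (winv (phi a) ++ (E ++ y) ++ a) (E ++ winv a ++ y ++ a).
Proof.
rewrite /phi !winv_cat winvK -!catA; apply: breq_catl; apply: breq_catl.
move: (breq_catr (y ++ a) (breq_winvL E)); by rewrite -catA.
Qed.
End Phi.

Lemma closure (z : int) (y : word n) m1 m2 g :
  vd m1 -> vd m2 -> vd g ->
  leG (lift n g) (lift n m1) -> leG (lift n g) (lift n m2) ->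
  (forall u, is_pos u -> leG u (lift n m1) -> leG u (lift n m2) -> leG u (lift n g)) ->
  is_pos (wpowz (Delta n) z ++ y) ->
  is_pos (wpowz (Delta n) z ++ winv (lift n m1) ++ y ++ lift n m1) ->
  is_pos (wpowz (Delta n) z ++ winv (lift n m2) ++ y ++ lift n m2) ->
  is_pos (wpowz (Delta n) z ++ winv (lift n g) ++ y ++ lift n g).
Proof.
move=> V1 V2 Vg Hg1 Hg2 HgU H0 Hs1 Hs2.
set E := wpowz (Delta n) z.
set t := lift n g.
have [mp [Vp Hp]] := pos_rep H0.
have K1 : leG (phi z (lift n m1)) (lift n (mp ++ m1)).
  rewrite lift_cat; apply: leG_breqR (breq_catr _ Hp) _.
  by apply: is_pos_breq (breq_sym (phi_eq _ _ _)) Hs1.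
have K2 : leG (phi z (lift n m2)) (lift n (mp ++ m2)).
  rewrite lift_cat; apply: leG_breqR (breq_catr _ Hp) _.
  by apply: is_pos_breq (breq_sym (phi_eq _ _ _)) Hs2.
have Vp1 : vd (mp ++ m1) by rewrite all_cat Vp V1.
have Vp2 : vd (mp ++ m2) by rewrite all_cat Vp V2.
have [h [Vh [_ [_ [Hh1 [Hh2 HhU]]]]]] := ggcd Vp1 Vp2.
have T1 : leG (phi z t) (lift n h).
  apply: HhU; first by apply: phi_pos; exact: is_pos_lift.
  - exact: leG_trans (phi_mono z Hg1) K1.
  - exact: leG_trans (phi_mono z Hg2) K2.
have T2 : leG (lift n mp) (lift n h).
  apply: HhU; first exact: is_pos_lift.
  - apply: lift_leG => //; exact: dvd_cat.
  - apply: lift_leG => //; exact: dvd_cat.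
set h' := winv (lift n mp) ++ lift n h.
have T3 : leG h' (lift n m1).
  rewrite /leG /h' winv_cat winvK -catA -lift_cat; exact: Hh1.
have T4 : leG h' (lift n m2).
  rewrite /leG /h' winv_cat winvK -catA -lift_cat; exact: Hh2.
have T5 : leG h' t by apply: HgU.
have T6 : leG (lift n h) (lift n mp ++ t).
  apply: leG_breqL (leG_catl (lift n mp) T5).
  rewrite /h' catA; have := breq_catr (lift n h) (breq_winvR (lift n mp)); by rewrite /=.
have T7 : leG (phi z t) ((E ++ y) ++ t).
  apply: leG_breqR (breq_catr _ (breq_sym Hp)) _; exact: leG_trans T1 T6.
exact: is_pos_breq (phi_eq _ _ _) T7.
Qed.

End Final.

Lemma inj_key (n r : nat) (J : 'I_r -> int) (d : 'I_r -> word n) (s s' : word n) i ms ms' :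
  inC J d -> inS J d s -> inS J d s' ->
  all (fun k => k < n.-1)%N (i :: ms) -> all (fun k => k < n.-1)%N (i :: ms') ->
  breq s (lift n (i :: ms)) -> breq s' (lift n (i :: ms')) -> breq s s'.
Proof.
move=> HC [[Hsim [Hnt HinC]] Hmin] [[Hsim' [Hnt' HinC']] Hmin'] V1 V2 Hs Hs'.
have [g [Vg [Hd1 [Hd2 [Hg1 [Hg2 HgU]]]]]] := ggcd V1 V2.
set t := lift n g.
have Hi : dvd [:: i] g.
  have Vi : all (fun k => k < n.-1)%N [:: i] by rewrite /= andbT; case/andP: V1.
  apply: (@leG_lift n [:: i] g Vi Vg).
  apply: HgU; first exact: is_pos_lift.
  - apply: lift_leG => //; exact: (dvd_cat [:: i] ms).
  - apply: lift_leG => //; exact: (dvd_cat [:: i] ms').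
have candt : candS J d t.
  split; [|split].
  - split; first exact: is_pos_lift.
    case: Hsim => Hps [_ [Hpd [c1 [Hc1 Hsc1]]]].
    split; first exact: is_pos_lift.
    split=> //.
    have [q [Hq Htq]] := leG_ex Hg1.
    exists (q ++ c1); split; first exact: is_pos_cat.
    rewrite catA; apply: breq_trans (breq_catr _ Htq) _.
    apply: breq_trans (breq_catr _ (breq_sym Hs)) Hsc1.
  - move=> H0.
    case: Hi => c Hc.
    have Vic : all (fun k => k < n.-1)%N ([:: i] ++ c).
      by rewrite (peq_all _ Hc).
    have H1 : breq (lift n ([:: i] ++ c)) [::].
      apply: breq_trans H0; exact: lift_peq Hc Vic.
    have := breq_pos (posw_lift _ _) (isT : posw ([::] : word n)) H1.
    by move/peq_size; rewrite pv_lift.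
  - move=> k.
    have A0 := HC k; have A1 := HinC k; have A2 := HinC' k.
    rewrite /conjw in A1 A2 *.
    apply/inf_ge_iff; move/inf_ge_iff: A0 => A0; move/inf_ge_iff: A1 => A1; move/inf_ge_iff: A2 => A2.
    apply: (closure V1 V2 Vg Hg1 Hg2 HgU A0).
    + by apply: is_pos_breq A1; apply: breq_catl; exact: breq_conj.
    + by apply: is_pos_breq A2; apply: breq_catl; exact: breq_conj.
have Hpt : forall (s0 : word n) m, simple s0 -> breq s0 (lift n m) -> leG t (lift n m) -> prec t s0.
  move=> s0 m [Hp0 _] Hsm Htm; split; first exact: is_pos_lift.
  split=> //; have [q [Hq Htq]] := leG_ex Htm; exists q; split=> //.
  exact: breq_trans Htq (breq_sym Hsm).
have E1 := Hmin t candt (Hpt _ _ Hsim Hs Hg1).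
have E2 := Hmin' t candt (Hpt _ _ Hsim' Hs' Hg2).
exact: breq_trans (breq_sym E1) E2.
Qed.

Lemma choose_seq (T : eqType) (P : T -> nat -> Prop) (x0 : T) (ss : seq T) :
  (forall s, s \in ss -> exists i, P s i) ->
  exists ls : seq nat, size ls = size ss /\ forall k, (k < size ss)%N -> P (nth x0 ss k) (nth 0 ls k).
Proof.
elim: ss => [|s ss IH] H; first by exists [::].
have [i Hi] := H s (mem_head _ _).
have [|ls [Hsz Hls]] := IH; first by move=> s' Hs'; apply: H; rewrite inE Hs' orbT.
exists (i :: ls); split; first by rewrite /= Hsz.
by case=> [|k] //= Hk; apply: Hls.
Qed.

Theorem corollary3p3 (n r : nat) (J : 'I_r -> int) (d : 'I_r -> word n) :
  inC J d ->
  forall ss : seq (word n),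
    (forall s, s \in ss -> inS J d s) ->
    (forall i j, (i < size ss)%N -> (j < size ss)%N -> i <> j ->
       ~ breq (nth [::] ss i) (nth [::] ss j)) ->
    (size ss <= n.-1)%N.
Proof.
move=> HC ss Hin Hdist.
pose P (s : word n) (i : nat) := exists ms, all (fun k => k < n.-1)%N (i :: ms) /\ breq s (lift n (i :: ms)).
have [|ls [Hsz Hls]] := @choose_seq _ P [::] ss.
  move=> s Hs.
  have [[[Hp _] [Hnt _]] _] := Hin s Hs.
  have [m [Vm Hm]] := pos_rep Hp.
  case: m Vm Hm => [|i ms] Vm Hm; first by exfalso; apply: Hnt.
  by exists i, ms.
have Huniq : uniq ls.
  apply/(uniqP 0) => k1 k2; rewrite !inE !Hsz => Hk1 Hk2 E.
  case: (eqVneq k1 k2) => // ne; exfalso.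
  have [ms1 [V1 H1]] := Hls k1 Hk1; have [ms2 [V2 H2]] := Hls k2 Hk2.
  rewrite E in V1 H1.
  apply: (Hdist k1 k2 Hk1 Hk2 (elimN eqP ne)).
  apply: (inj_key HC _ _ V1 V2 H1 H2); apply: Hin; exact: mem_nth.
have Hsub : {subset ls <= iota 0 n.-1}.
  move=> x /(nthP 0) [k Hk <-].
  rewrite mem_iota /= add0n; rewrite Hsz in Hk.
  by have [ms [/andP [-> _] _]] := Hls k Hk.
have := uniq_leq_size Huniq Hsub; by rewrite size_iota Hsz.
Qed.
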